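(* Let $\mathcal{H}$ be an $n$-dimensional complex Hilbert space and let $\rho_1,\dots,\rho_m$ be density operators on $\mathcal{H}$ whose eigenvectors collectively span $\mathcal{H}$, with prior probabilities $p_1,\dots,p_m>0$, $\sum_i p_i=1$. Write $\rho_i=\phi_i\phi_i^*$ for some matrices (factors) $\phi_i$, set $\psi_i=\sqrt{p_i}\,\phi_i$, let $\Psi$ be the matrix with block columns $\psi_1,\dots,\psi_m$, and let $T=(\Psi\Psi^* )^{-1/2}$. Let $\mu_i=T\psi_i$ and $\Sigma_i=\mu_i\mu_i^*$ (the least-squares measurement, LSM). If there is a constant $\alpha$, independent of $i$, such that $\mu_i^*\psi_i=\psi_i^*T\psi_i=\alpha I$ for every $i=1,\dots,m$, then the LSM $\{\Sigma_i\}$ minimizes the probability of a detection error, i.e. it maximizes $P_d=\sum_{i=1}^m p_i\operatorname{tr}(\rho_i\Pi_i)$ over all measurements $\{\Pi_i\}_{i=1}^m$ with $\Pi_i\ge 0$ and $\sum_{i=1}^m\Pi_i=I$.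
   Context: A density operator is a positive semidefinite Hermitian operator of trace one. A measurement is a collection of positive semidefinite Hermitian operators $\Pi_1,\dots,\Pi_m$ on $\mathcal{H}$ summing to the identity; the probability of correct detection is $P_d=\sum_i p_i\operatorname{tr}(\rho_i\Pi_i)$ and the probability of a detection error is $1-P_d$. $(\cdot)^{-1/2}$ denotes the inverse of the unique positive Hermitian square root; $\Psi\Psi^*=\sum_i\psi_i\psi_i^*$ is invertible because the eigenvectors of the $\rho_i$ span $\mathcal{H}$. $I$ in $\alpha I$ denotes the identity matrix of size equal to the number of columns of $\phi_i$. *)

(* Defs.v *)
(* Matrices over an arbitrary numClosedFieldType C
   (e.g. the complex numbers), H = column vectors 'cV[C]_n. *)
From HB Require Import structures.
From mathcomp Require Import all_boot all_order all_algebra.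
Set Implicit Arguments. Unset Strict Implicit. Unset Printing Implicit Defensive.
Import Order.TTheory GRing.Theory Num.Theory.
Local Open Scope ring_scope.

Definition ctmx {C : numClosedFieldType} {m n : nat} (A : 'M[C]_(m, n)) : 'M[C]_(n, m) :=
  map_mx Num.conj A^T.

Definition psdmx {C : numClosedFieldType} {n : nat} (A : 'M[C]_n) : Prop :=
  A = ctmx A /\ forall v : 'cV[C]_n, 0 <= (ctmx v *m A *m v) 0 0.

Definition density {C : numClosedFieldType} {n : nat} (rho : 'M[C]_n) : Prop :=
  psdmx rho /\ \tr rho = 1.

Definition is_measurement {C : numClosedFieldType} {n m : nat} (Pi : 'I_m -> 'M[C]_n) : Prop :=
  (forall i, psdmx (Pi i)) /\ \sum_i Pi i = 1%:M.

Definition Pd {C : numClosedFieldType} {n m : nat} (p : 'I_m -> C) (rho : 'I_m -> 'M[C]_n)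
  (Pi : 'I_m -> 'M[C]_n) : C :=
  \sum_i p i * \tr (rho i *m Pi i).

(* Main.v *)
Require Import Defs.
From HB Require Import structures.
From mathcomp Require Import all_boot all_order all_algebra.
Import Order.TTheory GRing.Theory Num.Theory.
Local Open Scope ring_scope.
Set Implicit Arguments. Unset Strict Implicit. Unset Printing Implicit Defensive.

Section Helpers.
Variable C : numClosedFieldType.

Lemma ctmx_mul m n k (A : 'M[C]_(m, n)) (B : 'M[C]_(n, k)) :
  ctmx (A *m B) = ctmx B *m ctmx A.
Proof. by rewrite /ctmx trmx_mul map_mxM. Qed.

Lemma ctmxK m n (A : 'M[C]_(m, n)) : ctmx (ctmx A) = A.
Proof. by apply/matrixP => i j; rewrite !mxE conjCK. Qed.

Lemma ctmxD m n (A B : 'M[C]_(m, n)) : ctmx (A + B) = ctmx A + ctmx B.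
Proof. by apply/matrixP => i j; rewrite !mxE rmorphD. Qed.

Lemma ctmxN m n (A : 'M[C]_(m, n)) : ctmx (- A) = - ctmx A.
Proof. by apply/matrixP => i j; rewrite !mxE rmorphN. Qed.

Lemma ctmxZ m n a (A : 'M[C]_(m, n)) : ctmx (a *: A) = a^* *: ctmx A.
Proof. by apply/matrixP => i j; rewrite !mxE rmorphM. Qed.

Lemma ctmx_sum m n (I : finType) (F : I -> 'M[C]_(m, n)) :
  ctmx (\sum_i F i) = \sum_i ctmx (F i).
Proof.
apply/matrixP => i j; rewrite !mxE !summxE rmorph_sum.
by apply: eq_bigr => k _; rewrite !mxE.
Qed.

Lemma ctmx_scalar n a : ctmx (a%:M : 'M[C]_n) = (a^*)%:M.
Proof. apply/matrixP => i j; rewrite !mxE eq_sym; by case: (i == j); rewrite ?mulr1n ?mulr0n ?rmorph0. Qed.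

Lemma ctmx_inv n (A : 'M[C]_n) : ctmx (invmx A) = invmx (ctmx A).
Proof. by rewrite /ctmx trmx_inv map_invmx. Qed.

Lemma tr_norm m n (X : 'M[C]_(m, n)) :
  \tr (X *m ctmx X) = \sum_i \sum_j X i j * (X i j)^*.
Proof.
rewrite /mxtrace; apply: eq_bigr => i _; rewrite mxE.
by apply: eq_bigr => j _; rewrite !mxE.
Qed.

Lemma tr_norm_ge0 m n (X : 'M[C]_(m, n)) : 0 <= \tr (X *m ctmx X).
Proof. by rewrite tr_norm; apply: sumr_ge0 => i _; apply: sumr_ge0 => j _; apply: mul_conjC_ge0. Qed.

Lemma tr_norm_eq0 m n (X : 'M[C]_(m, n)) : \tr (X *m ctmx X) = 0 -> X = 0.
Proof.
rewrite tr_norm => H; apply/matrixP => i j; rewrite mxE.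
have H1 : \sum_j X i j * (X i j)^* = 0.
  apply: (psumr_eq0P _ H) => // k _; apply: sumr_ge0 => l _; exact: mul_conjC_ge0.
have : X i j * (X i j)^* = 0.
  by apply: (psumr_eq0P _ H1) => // k _; exact: mul_conjC_ge0.
by move/eqP; rewrite mul_conjC_eq0 => /eqP.
Qed.

Lemma tr_norm_ge0' m n (X : 'M[C]_(m, n)) : 0 <= \tr (ctmx X *m X).
Proof. by rewrite mxtrace_mulC; apply: tr_norm_ge0. Qed.

Lemma psd_factor n (A : 'M[C]_n) : psdmx A -> exists B : 'M[C]_n, A = ctmx B *m B.
Proof.
move=> [Ah Apos].
have Anorm : A \is normalmx by apply/normalmxP; rewrite -/(ctmx A) -Ah.
have /orthomx_spectralP EA := Anorm.
set P := spectralmx A in EA; set d := spectral_diag A in EA.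
have PU : P \is unitarymx := spectral_unitarymx A.
have PP : P *m ctmx P = 1%:M by exact: (unitarymxP PU).
have iP : invmx P = ctmx P := invmx_unitary PU.
have D : P *m A *m ctmx P = diag_mx d.
  by rewrite EA iP !mulmxA PP mul1mx -mulmxA PP mulmx1.
have dge0 k : 0 <= d 0 k.
  have := Apos (ctmx (row k P)); rewrite ctmxK.
  have -> : (row k P *m A *m ctmx (row k P)) 0 0 = (P *m A *m ctmx P) k k.
    rewrite -row_mul !mxE; apply: eq_bigr => j _; rewrite !mxE //.
  by rewrite D mxE eqxx mulr1n.
exists (diag_mx (\row_k sqrtC (d 0 k)) *m P).
rewrite ctmx_mul -mulmxA [X in _ *m X]mulmxA.
have -> : ctmx (diag_mx (\row_k sqrtC (d 0 k))) *m diag_mx (\row_k sqrtC (d 0 k)) = diag_mx d.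
  apply/matrixP => i j; rewrite mul_mx_diag !mxE.
  case: eqVneq => [->|_]; last by rewrite !mulr0n rmorph0 mul0r.
  rewrite ?eqxx !mulr1n conj_Creal ?sqrtC_real // -expr2 sqrtCK //.
by rewrite EA iP mulmxA.
Qed.

Lemma psd_XXt n k (X : 'M[C]_(n, k)) : psdmx (X *m ctmx X).
Proof.
split; first by rewrite ctmx_mul ctmxK.
move=> v; have -> : ctmx v *m (X *m ctmx X) *m v
   = (ctmx v *m X) *m ctmx (ctmx v *m X).
  by rewrite ctmx_mul ctmxK !mulmxA.
rewrite -trace_mx11; exact: tr_norm_ge0.
Qed.

Lemma tr_psd_ge0 n k (W : 'M[C]_(k, n)) (B : 'M[C]_n) :
  psdmx B -> 0 <= \tr (ctmx W *m W *m B).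
Proof.
move=> /psd_factor [b ->].
rewrite -mulmxA mxtrace_mulC -!mulmxA mulmxA.
have -> : b *m ctmx W = ctmx (W *m ctmx b) by rewrite ctmx_mul ctmxK.
exact: tr_norm_ge0.
Qed.

End Helpers.
Unset Implicit Arguments. Set Strict Implicit. Set Printing Implicit Defensive.


Theorem theorem1 (C : numClosedFieldType) (n m : nat)
  (rho : 'I_m -> 'M[C]_n) (p : 'I_m -> C)
  (r : 'I_m -> nat) (phi : forall i : 'I_m, 'M[C]_(n, r i))
  (T : 'M[C]_n) (alpha : C) :
  (forall i, density (rho i)) ->
  (1%:M <= \sum_i rho i)%MS ->
  (forall i, 0 < p i) -> \sum_i p i = 1 ->
  (forall i, rho i = phi i *m ctmx (phi i)) ->
  let psi := fun i : 'I_m => sqrtC (p i) *: phi i in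
  psdmx T -> T *m T = invmx (\sum_i psi i *m ctmx (psi i)) ->
  (forall i, ctmx (psi i) *m T *m psi i = alpha%:M) ->
  let Sigma := fun i : 'I_m => (T *m psi i) *m ctmx (T *m psi i) in
  is_measurement Sigma /\
  (forall Pi : 'I_m -> 'M[C]_n, is_measurement Pi -> Pd p rho Pi <= Pd p rho Sigma).
Proof.
move=> Hrho Hspan Hp Hsum Hfac psi HT TT Halpha Sigma.
set S := \sum_i psi i *m ctmx (psi i) in TT.
have HQ i : psi i *m ctmx (psi i) = p i *: rho i.
  rewrite /psi ctmxZ -scalemxAl -scalemxAr scalerA Hfac; congr (_ *: _).
  by rewrite conj_Creal ?sqrtC_real ?(ltW (Hp i)) // -expr2 sqrtCK.
have Th : ctmx T = T by rewrite -HT.1.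
have Sunit : S \in unitmx.
  rewrite -row_free_unit -kermx_eq0; apply/eqP/row_matrixP => k; rewrite row0.
  set w := row k (kermx S).
  have wS : w *m S = 0 by apply/sub_kermxP; exact: row_sub.
  have E j : w *m (psi j *m ctmx (psi j)) *m ctmx w = (w *m psi j) *m ctmx (w *m psi j).
    by rewrite ctmx_mul !mulmxA.
  have Hw i : w *m psi i = 0.
    apply: tr_norm_eq0.
    have : \tr (w *m S *m ctmx w) = 0 by rewrite wS mul0mx linear0.
    rewrite /S mulmx_sumr mulmx_suml linear_sum /=.
    under eq_bigr do rewrite E.
    move=> H; apply: (psumr_eq0P _ H) => // j _; exact: tr_norm_ge0.
  have Hr i : w *m rho i = 0.
    have : p i *: (w *m rho i) = 0 by rewrite scalemxAr -HQ mulmxA Hw mul0mx.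
    move=> H; rewrite -[w *m rho i]scale1r -(mulVf (lt0r_neq0 (Hp i))) -scalerA H.
    by rewrite scaler0.
  have Hr' i : (rho i <= kermx (ctmx w))%MS.
    apply/sub_kermxP.
    have -> : rho i *m ctmx w = ctmx (w *m rho i) by rewrite ctmx_mul {2}Hfac ctmx_mul ctmxK -Hfac.
    by rewrite Hr; apply/matrixP => a b; rewrite !mxE rmorph0.
  have : (1%:M <= kermx (ctmx w))%MS.
    apply: submx_trans Hspan _; apply/sumsmx_subP => i _; exact: Hr'.
  move/sub_kermxP; rewrite mul1mx => /(congr1 ctmx); rewrite ctmxK => ->.
  by apply/matrixP => a b; rewrite !mxE rmorph0.
have TTS : T *m (T *m S) = 1%:M by rewrite mulmxA TT mulVmx.
have [Tunit _] := mulmx1_unit TTS.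
have iT : invmx T = T *m S.
  by rewrite -[RHS](mulKmx Tunit) TTS mulmx1.
have Sig i : Sigma i = T *m (psi i *m ctmx (psi i)) *m T.
  by rewrite /Sigma ctmx_mul Th !mulmxA.
have SumSig : \sum_i Sigma i = 1%:M.
  under eq_bigr do rewrite Sig.
  by rewrite -mulmx_suml -mulmx_sumr -/S -iT mulVmx.
split.
  by split => // i; exact: psd_XXt.
move=> Pi [HPi SPi].
set Ti := invmx T.
have HPd (M : 'I_m -> 'M[C]_n) : Pd p rho M = \sum_i \tr (psi i *m ctmx (psi i) *m M i).
  by apply: eq_bigr => i _; rewrite HQ -scalemxAl mxtraceZ.
have QTQ i : psi i *m ctmx (psi i) *m T *m psi i *m ctmx (psi i) = alpha *: (psi i *m ctmx (psi i)).
  have -> : psi i *m ctmx (psi i) *m T *m psi i *m ctmx (psi i) = psi i *m (ctmx (psi i) *m T *m psi i) *m ctmx (psi i) by rewrite !mulmxA.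
  by rewrite Halpha mul_mx_scalar -scalemxAl.
have PdSig : Pd p rho Sigma = alpha * \tr Ti.
  rewrite HPd; under eq_bigr => i _ do rewrite Sig !mulmxA QTQ -scalemxAl mxtraceZ.
  by rewrite -mulr_sumr -linear_sum /= -mulmx_suml -/S mxtrace_mulC -iT.
rewrite PdSig HPd.
have [B HB] := psd_factor HT.
have Tih : ctmx Ti = Ti by rewrite ctmx_inv Th.
have key i : \tr (psi i *m ctmx (psi i) *m Pi i) <= alpha * \tr (Ti *m Pi i).
  set Q := psi i *m ctmx (psi i).
  have Qh : ctmx Q = Q by rewrite /Q ctmx_mul ctmxK.
  set Y := B *m psi i.
  have E1 : \tr (ctmx Y *m Y) = (r i)%:R * alpha.
    have := Halpha i; rewrite HB /Y ctmx_mul !mulmxA => ->.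
    by rewrite mxtrace_scalar mulr_natl.
  have Ynz : Y != 0.
    apply/eqP => Y0.
    have psi0 : psi i = 0.
      by rewrite -(mulKmx Tunit (psi i)) HB -mulmxA -/Y Y0 !mulmx0.
    have := HQ i; rewrite psi0 mul0mx => /(congr1 mxtrace).
    rewrite mxtraceZ (Hrho i).2 mulr1 linear0 => /esym/eqP.
    by rewrite (negbTE (lt0r_neq0 (Hp i))).
  have Ypos : 0 < \tr (ctmx Y *m Y).
    rewrite lt_def tr_norm_ge0' andbT; apply/eqP => H0.
    by move: Ynz; rewrite (tr_norm_eq0 (etrans (mxtrace_mulC _ _) H0)) eqxx.
  have apos : 0 < alpha.
    move: Ypos; rewrite E1; case: (r i) => [|k]; first by rewrite mul0r ltxx.
    by rewrite pmulr_rgt0 // ltr0n.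
  set L := alpha%:M - Q *m T.
  have cL : ctmx L = alpha%:M - T *m Q.
    by rewrite /L ctmxD ctmxN ctmx_scalar ctmx_mul Th Qh conj_Creal // gtr0_real.
  have LTi : L *m Ti = alpha *: Ti - Q by rewrite /L mulmxBl mul_scalar_mx mulmxK.
  set W := B *m Ti *m ctmx L.
  have EW : ctmx W *m W = alpha *: (alpha *: Ti - Q).
    have -> : ctmx W *m W = L *m Ti *m (ctmx B *m B) *m Ti *m ctmx L.
      by rewrite /W !ctmx_mul ctmxK Tih !mulmxA.
    rewrite -HB -(mulmxA (L *m Ti)) /Ti (mulmxV Tunit) mulmx1 -/Ti LTi cL.
    rewrite mulmxBr mul_mx_scalar mulmxBl -scalemxAl mulKmx //.
    have -> : Q *m (T *m Q) = alpha *: Q by rewrite /Q !mulmxA QTQ.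
    by rewrite subrr subr0.
  have := tr_psd_ge0 W (HPi i); rewrite EW -scalemxAl mxtraceZ mulmxBl linearB /=.
  rewrite -scalemxAl mxtraceZ pmulr_rge0 // subr_ge0 //.
apply: le_trans (ler_sum _ (fun i _ => key i)) _.
by rewrite -mulr_sumr -linear_sum /= -mulmx_sumr SPi mulmx1.
Qed.
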